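(* Let $\delta>0$, let $\ell<\ell'<r'<r$ be real numbers and let $g:[\ell,r]\to\mathbb{R}$ satisfy $|g(x)+\frac12x^2|\leq\frac14\delta^2$ for all $x\in[\ell,r]$. Let $h_1$ and $h_2$ be the concave majorants of $g$ on $[\ell,r]$ and on $[\ell',r']$ respectively. Then $h_1(x)=h_2(x)$ for all $x\in[\ell'+3\delta,r'-3\delta]$.
   Context: The concave majorant of $g$ on an interval $I$ is $h(x_0)=\inf\{ax_0+b: ax+b\geq g(x)\text{ for all }x\in I\}$ for $x_0\in I$. *)

(* Defs.v *)
From HB Require Import structures.
From mathcomp Require Import all_boot all_order all_algebra.
From mathcomp Require Import all_classical all_reals.
Set Implicit Arguments. Unset Strict Implicit. Unset Printing Implicit Defensive.
Import Order.TTheory GRing.Theory Num.Theory.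
Local Open Scope ring_scope.
Local Open Scope classical_set_scope.

Definition concave_majorant (R : realType) (I : set R) (g : R -> R) (x0 : R) : R :=
  inf [set y : R | exists a b : R, (forall x, I x -> g x <= a * x + b) /\ y = a * x0 + b].

(* Main.v *)
Require Import Defs.
From HB Require Import structures.
From mathcomp Require Import all_boot all_order all_algebra.
From mathcomp Require Import all_classical all_reals.
From mathcomp Require Import ring lra.
Import Order.TTheory GRing.Theory Num.Theory.
Local Open Scope ring_scope.
Local Open Scope classical_set_scope.

Theorem mainTheorem16 (R : realType) (delta l l' r' r : R) (g : R -> R) :
  0 < delta -> l < l' -> l' < r' -> r' < r ->
  (forall x, l <= x <= r -> `|g x + x ^+ 2 / 2| <= delta ^+ 2 / 4) ->
  forall x, l' + 3 * delta <= x <= r' - 3 * delta ->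
    concave_majorant [set y | l <= y <= r] g x =
    concave_majorant [set y | l' <= y <= r'] g x.
Proof.
move=> d0 ll' l'r' r'r hg x0 /andP[hx1 hx2].
have hgb : forall x, l <= x <= r -> - (x ^+ 2 / 2) - delta ^+ 2 / 4 <= g x /\
    g x <= - (x ^+ 2 / 2) + delta ^+ 2 / 4.
  move=> x /hg; rewrite ler_norml => /andP[h1 h2]; split; lra.
rewrite /concave_majorant.
set S1 := [set y : R | _]; set S2 := [set y : R | _].
have T1 : S1 (- (x0 ^+ 2 / 2) + delta ^+ 2 / 4).
  exists (- x0), (x0 ^+ 2 / 2 + delta ^+ 2 / 4); split; last by rewrite expr2; lra.
  move=> x /= hx; have [_ h] := hgb x hx.
  have : 0 <= (x - x0) ^+ 2 by apply: sqr_ge0.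
  rewrite !expr2 in h * => hsq; nra.
have x0I1 : l <= x0 <= r by apply/andP; split; lra.
have x0I2 : l' <= x0 <= r' by apply/andP; split; lra.
have lb : forall (I : set R) (S : set R), S = [set y : R | exists a b : R,
    (forall x, I x -> g x <= a * x + b) /\ y = a * x0 + b] -> I x0 ->
    has_lbound S.
  move=> I S -> Ix0; exists (g x0) => y [a [b [h ->]]]; exact: h.
have lb1 := lb _ S1 erefl x0I1.
have lb2 := lb _ S2 erefl x0I2.
have S12 : S1 `<=` S2.
  move=> y [a [b [h ->]]]; exists a, b; split => // x /andP[h1 h2].
  apply: h; apply/andP; split; lra.
apply/eqP; rewrite eq_le; apply/andP; split.
- apply: lb_le_inf; first by exists (- (x0 ^+ 2 / 2) + delta ^+ 2 / 4); exact: S12.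
  move=> v [a [b [h ->]]].
  have [hv|hv] := leP (- (x0 ^+ 2 / 2) + delta ^+ 2 / 4) (a * x0 + b).
    by apply: le_trans hv; exact: ge_inf.
  apply: ge_inf => //; exists a, b; split => // x /andP[h1 h2].
  have [/andP[h3 h4]|hout] := boolP ((l' <= x) && (x <= r')).
    by apply: h; apply/andP; split.
  have [_ hgx] := hgb x (ltac:(apply/andP; split; lra)).
  apply: le_trans hgx _.
  have hr : x < l' \/ r' < x.
    case: (ltP x l') => ?; first by left.
    case: (ltP r' x) => ?; first by right.
    by exfalso; move: hout; rewrite negb_and; case/orP => /negP; apply; lra.
  case: hr => hr.
  + have hy : l' <= x0 - delta <= r' by apply/andP; split; lra.
    have hqy := h _ hy.
    have [hlo _] := hgb _ (ltac:(apply/andP; split; lra) : l <= x0 - delta <= r).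
    set c := delta ^+ 2 / 4 in hv hlo *.
    set A := delta; set B := x0 - delta - x.
    have hB : 2 * delta <= B by rewrite /B; lra.
    have qy : 0 <= a * (x0 - delta) + b + (x0 - delta) ^+ 2 / 2 + c by lra.
    have qx0 : 0 <= c - (a * x0 + b + x0 ^+ 2 / 2) by lra.
    have p1 := mulr_ge0 (ltac:(rewrite /A /B; lra) : 0 <= A + B) qy.
    have p2 := mulr_ge0 (ltac:(rewrite /B; lra) : 0 <= B) qx0.
    have p3 := mulr_ge0 (mulr_ge0 (ltac:(rewrite /A /B; lra) : 0 <= A + B)
       (ltac:(lra) : 0 <= B - delta)) (ltac:(lra) : 0 <= delta).
    have key : A * (a * x + b + x ^+ 2 / 2 - c) =
      (A + B) * (a * (x0 - delta) + b + (x0 - delta) ^+ 2 / 2 + c)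
      + B * (c - (a * x0 + b + x0 ^+ 2 / 2)) + (A + B) * (B - delta) * delta / 2.
      by rewrite /A /B /c; field.
    have : 0 <= A * (a * x + b + x ^+ 2 / 2 - c) by rewrite key; lra.
    rewrite pmulr_rge0 /A //; lra.
  + have hy : l' <= x0 + delta <= r' by apply/andP; split; lra.
    have hqy := h _ hy.
    have [hlo _] := hgb _ (ltac:(apply/andP; split; lra) : l <= x0 + delta <= r).
    set c := delta ^+ 2 / 4 in hv hlo *.
    set A := delta; set B := x - x0 - delta.
    have hB : 2 * delta <= B by rewrite /B; lra.
    have qy : 0 <= a * (x0 + delta) + b + (x0 + delta) ^+ 2 / 2 + c by lra.
    have qx0 : 0 <= c - (a * x0 + b + x0 ^+ 2 / 2) by lra.
    have p1 := mulr_ge0 (ltac:(rewrite /A /B; lra) : 0 <= A + B) qy.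
    have p2 := mulr_ge0 (ltac:(rewrite /B; lra) : 0 <= B) qx0.
    have p3 := mulr_ge0 (mulr_ge0 (ltac:(rewrite /A /B; lra) : 0 <= A + B)
       (ltac:(lra) : 0 <= B - delta)) (ltac:(lra) : 0 <= delta).
    have key : A * (a * x + b + x ^+ 2 / 2 - c) =
      (A + B) * (a * (x0 + delta) + b + (x0 + delta) ^+ 2 / 2 + c)
      + B * (c - (a * x0 + b + x0 ^+ 2 / 2)) + (A + B) * (B - delta) * delta / 2.
      by rewrite /A /B /c; field.
    have : 0 <= A * (a * x + b + x ^+ 2 / 2 - c) by rewrite key; lra.
    rewrite pmulr_rge0 /A //; lra.
- apply: lb_le_inf; first by exists (- (x0 ^+ 2 / 2) + delta ^+ 2 / 4).
  move=> v /S12; exact: ge_inf.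
Qed.
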